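(* Let $n\geq 2$ be an integer, and for $\alpha\in\mathbb{Q}$ let $s_{n,\alpha}=1+i\frac{\pi\alpha}{\log n}$. Then $\{\kappa_{s_{n,\alpha}}\}_{\alpha\in\mathbb{Q}}$ spans a dense subspace of $H^2$.
   Context: $H^2$ denotes the Hardy space of analytic functions $f(z)=\sum_{k\ge0}\hat f(k)z^k$ on the open unit disk with $\sum_{k}|\hat f(k)|^2<\infty$. For $s\in\mathbb{C}\setminus\{0\}$ set $\varphi_0(s)=-\frac1s$ and $\varphi_k(s)=-\frac1s\left((k+1)^{1-s}-k^{1-s}\right)$ for $k\geq1$. For $\Re s>1/2$ the zeta kernel is $\kappa_s(z)=\sum_{k=0}^\infty\varphi_k(\bar s)z^k\in H^2$; equivalently $\langle f,\kappa_s\rangle=\Lambda^{(s)}(f)$ where $\Lambda^{(s)}$ is the bounded linear functional on $H^2$ with $\Lambda^{(s)}(z^k)=\varphi_k(s)$. *)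

(* Defs.v *)
From Stdlib Require Import Reals QArith List.
From Coquelicot Require Import Coquelicot.
Open Scope R_scope.

(* Complex power x^w = exp(w * ln x) for a real base x > 0, written out:
   x^w = x^(Re w) * (cos (Im w * ln x) + i sin (Im w * ln x)). *)
Definition cpow_pos (x : R) (w : C) : C :=
  (Rpower x (Re w) * cos (Im w * ln x), Rpower x (Re w) * sin (Im w * ln x)).

Definition phi (k : nat) (s : C) : C :=
  match k with
  | O => Copp (Cinv s)
  | S _ => Cmult (Copp (Cinv s))
             (Cminus (cpow_pos (INR (S k)) (Cminus (RtoC 1) s))
                     (cpow_pos (INR k) (Cminus (RtoC 1) s)))
  end.

(* Taylor coefficients of the zeta kernel kappa_s(z) = sum_k phi_k(conj s) z^k *)
Definition kappa (s : C) (k : nat) : C := phi k (Cconj s).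

(* H^2 identified with square-summable coefficient sequences. *)
Definition inH2 (f : nat -> C) : Prop := ex_series (fun k => (Cmod (f k))^2).

Definition s_na (n : nat) (a : Q) : C := (1, PI * Q2R a / ln (INR n)).

Definition lincomb (n : nat) (L : list (C * Q)) (k : nat) : C :=
  fold_right (fun p acc => Cplus (Cmult (fst p) (kappa (s_na n (snd p)) k)) acc)
             (RtoC 0) L.

(* Main.v *)
Require Import Defs.
From Stdlib Require Import Reals QArith List Lia Lra Arith ZArith.
From Coquelicot Require Import Coquelicot.
Open Scope R_scope.

Definition cis (x : R) : C := (cos x, sin x).

Lemma cis_add x y : cis (x + y) = Cmult (cis x) (cis y).
Proof.
  unfold cis; apply injective_projections; simpl;
  [rewrite cos_plus | rewrite sin_plus]; ring.
Qed.

Lemma cis_0 : cis 0 = RtoC 1.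
Proof. unfold cis, RtoC; rewrite cos_0, sin_0; reflexivity. Qed.

Definition tq (n : nat) (a : Q) : R := PI * Q2R a / ln (INR n).

Lemma tq_plus n a b : tq n (a + b)%Q = tq n a + tq n b.
Proof. unfold tq; rewrite Qreals.Q2R_plus; unfold Rdiv; ring. Qed.

Lemma tq_opp n a : tq n (- a)%Q = - tq n a.
Proof. unfold tq; rewrite Qreals.Q2R_opp; unfold Rdiv; ring. Qed.

Lemma tq_0 n : tq n 0%Q = 0.
Proof. unfold tq, Q2R; simpl; unfold Rdiv; ring. Qed.

Lemma cpow_it x t : cpow_pos x (Cminus (RtoC 1) (1, - t)) = cis (t * ln x).
Proof.
  unfold cpow_pos, cis, Cminus, Cplus, Copp, RtoC; simpl.
  replace (1 + - (1)) with 0 by ring.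
  replace (0 + - - t) with t by ring.
  unfold Rpower. rewrite Rmult_0_l, exp_0, !Rmult_1_l. reflexivity.
Qed.

Lemma kappa_eq n a k :
  kappa (s_na n a) k =
  Cmult (Copp (Cinv (1, - tq n a)))
    (Cminus (cis (tq n a * ln (INR (S k))))
            (match k with O => RtoC 0 | _ => cis (tq n a * ln (INR k)) end)).
Proof.
  unfold kappa, s_na, Cconj; simpl fst; simpl snd. fold (tq n a).
  destruct k as [|k'].
  - simpl phi. rewrite INR_1, ln_1, Rmult_0_r, cis_0.
    replace (Cminus (RtoC 1) (RtoC 0)) with (RtoC 1).
    + rewrite Cmult_1_r. reflexivity.
    + unfold Cminus, Cplus, Copp, RtoC; simpl; f_equal; ring.
  - unfold phi. rewrite !cpow_it. reflexivity.
Qed.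

Definition TP (n : nat) (M : list (C * Q)) (y : R) : C :=
  fold_right (fun p acc => Cplus (Cmult (fst p) (cis (tq n (snd p) * y))) acc) (RtoC 0) M.

Definition conv (n : nat) (M : list (C * Q)) : list (C * Q) :=
  map (fun p => (Cmult (Copp (1, - tq n (snd p))) (fst p), snd p)) M.

Definition prevTP n M k : C := match k with O => RtoC 0 | _ => TP n M (ln (INR k)) end.

Lemma lincomb_conv n M k :
  lincomb n (conv n M) k = Cminus (TP n M (ln (INR (S k)))) (prevTP n M k).
Proof.
  induction M as [|[d a] M IH].
  - unfold prevTP; destruct k; simpl; unfold Cminus, Cplus, Copp, RtoC; simpl;
    f_equal; ring.
  - change (lincomb n (conv n ((d, a) :: M)) k) with
      (Cplus (Cmult (Cmult (Copp (1, - tq n a)) d) (kappa (s_na n a) k)) (lincomb n (conv n M) k)).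
    rewrite IH.
    rewrite kappa_eq. unfold prevTP; destruct k as [|k'].
    + simpl. field.
      intro H. injection H. lra.
    + simpl. field. intro H. injection H. lra.
Qed.

Lemma ln_le' x y : 0 < x -> x <= y -> ln x <= ln y.
Proof.
  intros Hx Hxy. destruct (Rle_lt_or_eq_dec _ _ Hxy) as [H|H].
  - left. apply ln_increasing; auto.
  - subst; lra.
Qed.

Lemma ln_div' a b : 0 < a -> 0 < b -> ln (a / b) = ln a - ln b.
Proof.
  intros. unfold Rdiv. rewrite ln_mult, ln_Rinv; try lra.
  apply Rinv_0_lt_compat; auto.
Qed.

Lemma ln_le_sub1 x : 0 < x -> ln x <= x - 1.
Proof.
  intro Hx. rewrite <- (ln_exp (x - 1)).
  apply ln_le'; auto. pose proof (exp_ineq1_le (x - 1)). lra.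
Qed.

Lemma ln_gap a b : 0 < a -> 0 < b -> (b - a) / b <= ln b - ln a.
Proof.
  intros Ha Hb. pose proof (ln_le_sub1 (a / b)) as H.
  rewrite ln_div' in H by auto.
  assert (0 < a / b) by (apply Rdiv_lt_0_compat; auto).
  specialize (H H0).
  replace ((b - a) / b) with (1 - a / b) by (field; lra). lra.
Qed.

Lemma ln_gap_up a b : 0 < a -> 0 < b -> ln b - ln a <= (b - a) / a.
Proof.
  intros Ha Hb. pose proof (ln_gap b a Hb Ha).
  replace ((b - a) / a) with (- ((a - b) / a)) by (field; lra). lra.
Qed.

Lemma abs_sin_pos y : 0 < y -> Rabs (sin y) <= y.
Proof.
  intro H. pose proof (sin_lt_x y H). pose proof (SIN_bound y).
  apply Rabs_le. split; [|lra].
  destruct (Rle_dec y 1).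
  - assert (0 <= sin y). { apply sin_ge_0; pose proof PI2_3_2; lra. } lra.
  - lra.
Qed.

Lemma abs_sin_le x : Rabs (sin x) <= Rabs x.
Proof.
  destruct (Rtotal_order x 0) as [H|[H|H]].
  - replace x with (- (- x)) by ring. rewrite sin_neg, !Rabs_Ropp.
    rewrite (Rabs_left x) by lra. apply abs_sin_pos. lra.
  - subst. rewrite sin_0, Rabs_R0. lra.
  - rewrite (Rabs_pos_eq x) by lra. apply abs_sin_pos. lra.
Qed.

Lemma cos_lip u v : Rabs (cos u - cos v) <= Rabs (u - v).
Proof.
  rewrite form2. rewrite !Rabs_mult.
  pose proof (abs_sin_le ((u - v) / 2)).
  pose proof (SIN_bound ((u + v) / 2)).
  assert (Rabs (sin ((u + v) / 2)) <= 1) by (apply Rabs_le; lra).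
  replace (Rabs (u - v)) with (2 * Rabs ((u - v) / 2)).
  2:{ unfold Rdiv. rewrite Rabs_mult. rewrite (Rabs_pos_eq (/2)) by lra. field. }
  rewrite Rabs_left by lra.
  pose proof (Rabs_pos (sin ((u - v) / 2))).
  pose proof (Rabs_pos (sin ((u + v) / 2))).
  nra.
Qed.

Lemma pow_le_one b M : 0 <= b <= 1 -> b ^ M <= 1.
Proof.
  intro H. induction M as [|M IH]; simpl. lra.
  assert (0 <= b ^ M) by (apply pow_le; lra). nra.
Qed.

Lemma pow_diff a b M : 0 <= a <= 1 -> 0 <= b <= 1 ->
  Rabs (a ^ M - b ^ M) <= INR M * Rabs (a - b).
Proof.
  intros Ha Hb. induction M as [|M IH].
  - simpl. rewrite Rminus_diag, Rabs_R0. lra.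
  - replace (a ^ S M - b ^ S M) with (a * (a ^ M - b ^ M) + b ^ M * (a - b)) by (simpl; ring).
    eapply Rle_trans. apply Rabs_triang.
    rewrite !Rabs_mult. rewrite S_INR.
    assert (0 <= b ^ M <= 1). { split. apply pow_le; lra. apply pow_le_one; lra. }
    rewrite (Rabs_pos_eq a) by lra. rewrite (Rabs_pos_eq (b ^ M)) by lra.
    pose proof (Rabs_pos (a ^ M - b ^ M)). pose proof (Rabs_pos (a - b)).
    nra.
Qed.

Lemma exp_pow_n x N : exp x ^ N = exp (INR N * x).
Proof.
  induction N as [|N IH].
  - simpl. rewrite Rmult_0_l, exp_0. reflexivity.
  - rewrite S_INR. simpl. rewrite IH, <- exp_plus. f_equal. ring.
Qed.

Lemma exp_ge_pow5 x : 0 <= x -> (x / 5) ^ 5 <= exp x.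
Proof.
  intro Hx. replace (exp x) with (exp (x / 5) ^ 5).
  2:{ rewrite exp_pow_n. f_equal. simpl. field. }
  apply pow_incr. split. lra. pose proof (exp_ineq1_le (x/5)). lra.
Qed.

Lemma TP_app n M1 M2 y : TP n (M1 ++ M2) y = Cplus (TP n M1 y) (TP n M2 y).
Proof.
  induction M1 as [|p M1 IH]; simpl.
  - rewrite Cplus_0_l. reflexivity.
  - unfold TP in *. simpl. rewrite IH. rewrite Cplus_assoc. reflexivity.
Qed.

Definition mulL (M1 M2 : list (C * Q)) : list (C * Q) :=
  flat_map (fun p => map (fun q => (Cmult (fst p) (fst q), Qplus (snd p) (snd q))) M2) M1.

Lemma TP_map n d a M y :
  TP n (map (fun q => (Cmult d (fst q), Qplus a (snd q))) M) y
  = Cmult (Cmult d (cis (tq n a * y))) (TP n M y).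
Proof.
  induction M as [|[e b] M IH]; unfold TP in *; simpl.
  - unfold RtoC, Cmult; simpl; f_equal; ring.
  - rewrite IH. rewrite tq_plus, Rmult_plus_distr_r, cis_add. ring.
Qed.

Lemma TP_mul n M1 M2 y : TP n (mulL M1 M2) y = Cmult (TP n M1 y) (TP n M2 y).
Proof.
  induction M1 as [|[d a] M1 IH].
  - unfold TP; simpl. unfold RtoC, Cmult; simpl; f_equal; ring.
  - unfold mulL in *. simpl flat_map. rewrite TP_app, IH.
    simpl fst; simpl snd. rewrite TP_map.
    change (TP n ((d,a)::M1) y) with (Cplus (Cmult d (cis (tq n a * y))) (TP n M1 y)). ring.
Qed.

Fixpoint powL (K : list (C * Q)) (j : nat) : list (C * Q) :=
  match j with
  | O => (RtoC 1, 0%Q) :: nil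
  | S j' => mulL K (powL K j')
  end.

Definition kern (n : nat) (b : Q) (y0 : R) : list (C * Q) :=
  (RtoC (1/2), 0%Q) ::
  (Cmult (RtoC (1/4)) (cis (- (tq n b) * y0)), b) ::
  (Cmult (RtoC (1/4)) (cis (tq n b * y0)), Qopp b) :: nil.

Lemma TP_kern n b y0 y :
  TP n (kern n b y0) y = RtoC ((1 + cos (tq n b * (y - y0))) / 2).
Proof.
  unfold TP, kern; simpl. rewrite tq_0, tq_opp, Rmult_0_l, cis_0.
  rewrite <- !Cmult_assoc, <- !cis_add.
  replace (- tq n b * y0 + tq n b * y) with (tq n b * (y - y0)) by ring.
  replace (tq n b * y0 + - tq n b * y) with (- (tq n b * (y - y0))) by ring.
  set (u := tq n b * (y - y0)).
  unfold cis, RtoC, Cmult, Cplus; simpl.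
  rewrite cos_neg, sin_neg.
  apply injective_projections; simpl; field.
Qed.

Lemma TP_pow n b y0 y j :
  TP n (powL (kern n b y0) j) y = RtoC (((1 + cos (tq n b * (y - y0))) / 2) ^ j).
Proof.
  induction j as [|j IH].
  - unfold TP; simpl. rewrite tq_0, Rmult_0_l, cis_0.
    unfold RtoC, Cmult, Cplus; simpl; f_equal; ring.
  - change (powL (kern n b y0) (S j)) with (mulL (kern n b y0) (powL (kern n b y0) j)).
    rewrite TP_mul, IH, TP_kern. rewrite <- RtoC_mult. simpl. reflexivity.
Qed.

Definition Gs (be y0 : R) (M : nat) (k : nat) : R :=
  ((1 + cos (be * (ln (INR (S k)) - y0))) / 2) ^ M.
Definition Gprev be y0 M k : R := match k with O => 0 | S k' => Gs be y0 M k' end.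
Definition ind (m k : nat) : R := if Nat.eqb k m then 1 else 0.
Definition Dk be y0 M m k : R := ind m k - ind (S m) k - Gs be y0 M k + Gprev be y0 M k.

Lemma lincomb_pow n b y0 M k :
  lincomb n (conv n (powL (kern n b y0) M)) k =
  RtoC (Gs (tq n b) y0 M k - Gprev (tq n b) y0 M k).
Proof.
  rewrite lincomb_conv, TP_pow. unfold prevTP, Gprev, Gs.
  destruct k as [|k'].
  - unfold Cminus, Cplus, Copp, RtoC; simpl; f_equal; ring.
  - rewrite TP_pow. unfold Cminus, Cplus, Copp, RtoC; simpl; f_equal; ring.
Qed.

Lemma err_eq n b y0 M m k :
  (Cmod (Cminus (Cminus (if Nat.eqb k m then RtoC 1 else RtoC 0) (if Nat.eqb k (S m) then RtoC 1 else RtoC 0))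
                (lincomb n (conv n (powL (kern n b y0) M)) k)))^2
  = (Dk (tq n b) y0 M m k)^2.
Proof.
  rewrite lincomb_pow.
  replace (Cminus (Cminus (if Nat.eqb k m then RtoC 1 else RtoC 0) (if Nat.eqb k (S m) then RtoC 1 else RtoC 0))
     (RtoC (Gs (tq n b) y0 M k - Gprev (tq n b) y0 M k)))
    with (RtoC (Dk (tq n b) y0 M m k)).
  - rewrite Cmod_R, pow2_abs. reflexivity.
  - unfold Dk, ind. destruct (Nat.eqb k m); destruct (Nat.eqb k (S m));
    unfold Cminus, Cplus, Copp, RtoC; simpl; f_equal; ring.
Qed.

Definition bet (n p : nat) : R := PI / (INR p * ln (INR n)).
Definition rho (n p m : nat) : R := (1 + cos (bet n p / (INR m + 2))) / 2.

Lemma lnn_pos n : (2 <= n)%nat -> 0 < ln (INR n).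
Proof.
  intro Hn. rewrite <- ln_1. apply ln_increasing. lra.
  apply (le_INR 2) in Hn. simpl in Hn. lra.
Qed.

Lemma lnS_range n p k : (2 <= n)%nat -> (S k <= n ^ p)%nat ->
  0 <= ln (INR (S k)) <= INR p * ln (INR n).
Proof.
  intros Hn Hk. split.
  - rewrite <- ln_1. apply ln_le'. lra. rewrite S_INR; pose proof (pos_INR k); lra.
  - rewrite <- ln_pow by (apply lt_0_INR; lia). rewrite <- pow_INR. apply ln_le'.
    apply lt_0_INR; lia. apply le_INR; auto.
Qed.

Lemma frac_le x y c : 0 < c -> 0 < y -> y <= x * c -> 1 / c <= x / y.
Proof.
  intros Hc Hy H.
  assert (x / y - 1 / c = (x * c - y) * / (c * y)) by (field; lra).
  assert (0 <= (x * c - y) * / (c * y)).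
  { apply Rmult_le_pos. lra. left. apply Rinv_0_lt_compat. nra. }
  lra.
Qed.

Lemma ln_sep m k : k <> m -> 1 / (INR m + 2) <= Rabs (ln (INR (S k)) - ln (INR (S m))).
Proof.
  intro Hkm. pose proof (pos_INR k) as Pk. pose proof (pos_INR m) as Pm.
  assert (P2 : 0 < 1 / (INR m + 2)) by (apply Rdiv_lt_0_compat; lra).
  destruct (lt_eq_lt_dec k m) as [[H|H]|H].
  - apply (le_INR (S k)) in H. rewrite S_INR in H.
    pose proof (ln_gap (INR (S k)) (INR (S m))) as G.
    rewrite !S_INR in G |- *. specialize (G ltac:(lra) ltac:(lra)).
    assert (1 / (INR m + 2) <= (INR m + 1 - (INR k + 1)) / (INR m + 1)).
    { apply frac_le; try lra.
      assert (0 <= (INR m - INR k - 1) * (INR m + 2)) by (apply Rmult_le_pos; lra). nra. }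
    rewrite Rabs_left1 by lra. lra.
  - congruence.
  - apply (le_INR (S m)) in H. rewrite S_INR in H.
    pose proof (ln_gap (INR (S m)) (INR (S k))) as G.
    rewrite !S_INR in G |- *. specialize (G ltac:(lra) ltac:(lra)).
    assert (1 / (INR m + 2) <= (INR k + 1 - (INR m + 1)) / (INR k + 1)).
    { apply frac_le; try lra.
      assert (0 <= (INR k - INR m - 1) * (INR m + 1)) by (apply Rmult_le_pos; lra). nra. }
    rewrite Rabs_pos_eq by lra. lra.
Qed.

Lemma cos_abs x : cos (Rabs x) = cos x.
Proof.
  destruct (Rcase_abs x). rewrite Rabs_left by lra. apply cos_neg.
  rewrite Rabs_pos_eq by lra. reflexivity.
Qed.

Lemma Gs_small n p m M k : (2 <= n)%nat -> (m + 2 <= n ^ p)%nat -> (1 <= p)%nat ->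
  bet n p / (INR m + 2) <= 1 ->
  (k <= n ^ p - 1)%nat -> k <> m ->
  0 <= Gs (bet n p) (ln (INR (S m))) M k <= rho n p m ^ M.
Proof.
  intros Hn Hp Hp1 Hth Hk Hkm.
  pose proof (lnn_pos n Hn) as HL.
  assert (Hpp : 1 <= INR p) by (apply (le_INR 1); auto).
  assert (Hb : 0 < bet n p).
  { unfold bet. apply Rdiv_lt_0_compat. pose proof PI2_RGT_0; lra. nra. }
  assert (Hbp : bet n p * (INR p * ln (INR n)) = PI).
  { unfold bet. field. nra. }
  pose proof (lnS_range n p k Hn ltac:(lia)) as R1.
  pose proof (lnS_range n p m Hn ltac:(lia)) as R2.
  set (u := ln (INR (S k)) - ln (INR (S m))).
  assert (Ru : Rabs u <= INR p * ln (INR n)) by (apply Rabs_le; unfold u; lra).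
  pose proof (ln_sep m k Hkm) as Su. fold u in Su.
  pose proof (pos_INR m).
  assert (Hx1 : Rabs (bet n p * u) <= PI).
  { rewrite Rabs_mult, (Rabs_pos_eq (bet n p)) by lra. nra. }
  assert (Hx2 : bet n p / (INR m + 2) <= Rabs (bet n p * u)).
  { rewrite Rabs_mult, (Rabs_pos_eq (bet n p)) by lra.
    replace (bet n p / (INR m + 2)) with (bet n p * (1 / (INR m + 2))) by (field; lra).
    apply Rmult_le_compat_l; lra. }
  assert (Hth0 : 0 <= bet n p / (INR m + 2)).
  { apply Rdiv_le_0_compat; lra. }
  assert (Hc : cos (bet n p * u) <= cos (bet n p / (INR m + 2))).
  { rewrite <- cos_abs. apply cos_decr_1; try lra. }
  pose proof (COS_bound (bet n p * u)).
  unfold Gs, rho. fold u. split.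
  - apply pow_le. lra.
  - apply pow_incr. lra.
Qed.

Lemma Gs_m n p m M : Gs (bet n p) (ln (INR (S m))) M m = 1.
Proof.
  unfold Gs. rewrite Rminus_diag, Rmult_0_r, cos_0.
  replace ((1 + 1) / 2) with 1 by field. apply pow1.
Qed.

Lemma sq_le x B : - B <= x <= B -> x ^ 2 <= B ^ 2.
Proof. intros. simpl. nra. Qed.

Lemma near n p m M k : (2 <= n)%nat -> (m + 2 <= n ^ p)%nat -> (1 <= p)%nat ->
  bet n p / (INR m + 2) <= 1 ->
  (k <= n ^ p - 1)%nat ->
  (Dk (bet n p) (ln (INR (S m))) M m k) ^ 2 <= (rho n p m ^ M) ^ 2.
Proof.
  intros Hn Hp Hp1 Hth Hk.
  assert (HS : forall j, (j <= n ^ p - 1)%nat -> j <> m ->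
     0 <= Gs (bet n p) (ln (INR (S m))) M j <= rho n p m ^ M).
  { intros j Hj Hjm. apply Gs_small; auto. }
  unfold Dk, ind.
  destruct (Nat.eq_dec k m) as [E|E].
  - subst k. rewrite Nat.eqb_refl. replace (Nat.eqb m (S m)) with false by (symmetry; apply Nat.eqb_neq; lia).
    rewrite Gs_m. destruct m as [|m'].
    + unfold Gprev; cbv beta iota. pose proof (pow2_ge_0 (rho n p 0 ^ M)). lra.
    + unfold Gprev; cbv beta iota. specialize (HS m' ltac:(lia) ltac:(lia)). apply sq_le; lra.
  - replace (Nat.eqb k m) with false by (symmetry; apply Nat.eqb_neq; lia).
    destruct (Nat.eq_dec k (S m)) as [E2|E2].
    + subst k. rewrite Nat.eqb_refl. unfold Gprev; cbv beta iota. rewrite Gs_m.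
      specialize (HS (S m) ltac:(lia) ltac:(lia)). apply sq_le; lra.
    + replace (Nat.eqb k (S m)) with false by (symmetry; apply Nat.eqb_neq; lia).
      specialize (HS k Hk E) as H1.
      destruct k as [|k'].
      * unfold Gprev; cbv beta iota. apply sq_le; lra.
      * unfold Gprev; cbv beta iota. specialize (HS k' ltac:(lia) ltac:(lia)). apply sq_le; lra.
Qed.

Lemma far n p m M k : (2 <= n)%nat -> (m + 2 <= n ^ p)%nat -> (1 <= p)%nat ->
  (n ^ p <= k)%nat ->
  (Dk (bet n p) (ln (INR (S m))) M m k) ^ 2 <=
  (INR M * bet n p / 2) ^ 2 * (1 / (INR k - 1) - 1 / INR k).
Proof.
  intros Hn Hp Hp1 Hk.
  pose proof (lnn_pos n Hn) as HL.
  assert (Hpp : 1 <= INR p) by (apply (le_INR 1); auto).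
  assert (Hb : 0 < bet n p).
  { unfold bet. apply Rdiv_lt_0_compat. pose proof PI2_RGT_0; lra. nra. }
  unfold Dk, ind.
  replace (Nat.eqb k m) with false by (symmetry; apply Nat.eqb_neq; lia).
  replace (Nat.eqb k (S m)) with false by (symmetry; apply Nat.eqb_neq; lia).
  destruct k as [|k']. { lia. }
  unfold Gprev; cbv beta iota.
  assert (Hk' : 1 <= INR k') by (apply (le_INR 1); lia).
  set (K := INR (S k')).
  assert (HK : K = INR k' + 1) by (unfold K; rewrite S_INR; auto).
  set (y0 := ln (INR (S m))).
  unfold Gs.
  set (a := bet n p * (ln (INR (S k')) - y0)).
  set (b := bet n p * (ln (INR (S (S k'))) - y0)).
  pose proof (COS_bound a). pose proof (COS_bound b).
  pose proof (pow_diff ((1 + cos a) / 2) ((1 + cos b) / 2) M ltac:(lra) ltac:(lra)) as P1.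
  pose proof (cos_lip a b) as P2.
  pose proof (ln_gap_up (INR (S k')) (INR (S (S k')))) as P3.
  fold K in P3. rewrite (S_INR (S k')) in P3. fold K in P3.
  specialize (P3 ltac:(lra) ltac:(lra)).
  pose proof (ln_gap (INR (S k')) (INR (S (S k')))) as P4.
  fold K in P4. rewrite (S_INR (S k')) in P4. fold K in P4.
  specialize (P4 ltac:(lra) ltac:(lra)).
  replace (K + 1 - K) with 1 in P3, P4 by ring.
  assert (P5 : 0 <= 1 / (K + 1)) by (apply Rlt_le, Rdiv_lt_0_compat; lra).
  assert (Hab : Rabs (a - b) <= bet n p * (1 / K)).
  { unfold a, b. rewrite (S_INR (S k')). fold K. replace (bet n p * (ln K - y0) - bet n p * (ln (K + 1) - y0))
      with (- (bet n p * (ln (K + 1) - ln K))) by ring.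
    rewrite Rabs_Ropp, Rabs_mult, (Rabs_pos_eq (bet n p)) by lra.
    rewrite Rabs_pos_eq by lra. apply Rmult_le_compat_l; lra. }
  replace ((1 + cos a) / 2 - (1 + cos b) / 2) with ((cos a - cos b) / 2) in P1 by field.
  assert (E2 : Rabs ((cos a - cos b) / 2) = Rabs (cos a - cos b) * / 2).
  { unfold Rdiv. rewrite Rabs_mult, (Rabs_pos_eq (/2)) by lra. reflexivity. }
  rewrite E2 in P1.
  pose proof (pos_INR M).
  assert (HD : Rabs (((1 + cos a) / 2) ^ M - ((1 + cos b) / 2) ^ M) <= INR M * bet n p / 2 * (1 / K)).
  { eapply Rle_trans. apply P1.
    replace (INR M * bet n p / 2 * (1 / K)) with (INR M * ((bet n p * (1 / K)) * / 2)) by (field; lra).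
    apply Rmult_le_compat_l. lra. apply Rmult_le_compat_r. lra. lra. }
  set (D := ((1 + cos a) / 2) ^ M - ((1 + cos b) / 2) ^ M) in *.
  replace (0 - 0 - ((1 + cos b) / 2) ^ M + ((1 + cos a) / 2) ^ M) with D by (unfold D; ring).
  set (A := INR M * bet n p / 2) in *.
  assert (0 <= A) by (unfold A; apply Rmult_le_pos; [apply Rmult_le_pos|]; lra).
  assert (HD2 : D ^ 2 <= (A * (1 / K)) ^ 2).
  { apply sq_le. pose proof (Rle_abs D). pose proof (Rle_abs (- D)).
    rewrite Rabs_Ropp in *. lra. }
  assert (HK2 : (1 / K) ^ 2 <= 1 / (K - 1) - 1 / K).
  { assert (1 / (K - 1) - 1 / K - (1 / K) ^ 2 = / (K * K * (K - 1))) by (field; lra).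
    assert (0 < / (K * K * (K - 1))).
    { apply Rinv_0_lt_compat. assert (0 < K * K) by nra. nra. }
    lra. }
  eapply Rle_trans. apply HD2.
  rewrite Rpow_mult_distr. apply Rmult_le_compat_l. apply pow_le; auto. apply HK2.
Qed.

Lemma psum_bound (a : nat -> R) (K0 : nat) (B A : R) :
  (1 <= K0)%nat -> 0 <= B -> 0 <= A ->
  (forall k, (k <= K0)%nat -> a k <= B) ->
  (forall k, (K0 < k)%nat -> a k <= A * (1 / (INR k - 1) - 1 / INR k)) ->
  forall N, sum_f_R0 a N <= INR (S K0) * B + A / INR K0.
Proof.
  intros HK HB HA H1 H2.
  assert (HK0 : 1 <= INR K0) by (apply (le_INR 1); auto).
  assert (I1 : forall N, (N <= K0)%nat -> sum_f_R0 a N <= INR (S N) * B).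
  { induction N as [|N IH]; intro HN.
    - simpl. specialize (H1 0%nat ltac:(lia)). lra.
    - simpl sum_f_R0. specialize (IH ltac:(lia)). specialize (H1 (S N) HN).
      rewrite (S_INR (S N)). lra. }
  assert (I2 : forall d, sum_f_R0 a (K0 + d) <= INR (S K0) * B + A * (1 / INR K0 - 1 / INR (K0 + d))).
  { induction d as [|d IH].
    - rewrite Nat.add_0_r. specialize (I1 K0 (le_n _)).
      replace (1 / INR K0 - 1 / INR K0) with 0 by ring. lra.
    - replace (K0 + S d)%nat with (S (K0 + d)) by lia.
      simpl sum_f_R0. specialize (H2 (S (K0 + d)) ltac:(lia)).
      rewrite (S_INR (K0 + d)) in H2 |- *.
      replace (INR (K0 + d) + 1 - 1) with (INR (K0 + d)) in H2 by ring.
      lra. }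
  intro N. destruct (le_lt_dec N K0) as [HN|HN].
  - specialize (I1 N HN). apply le_INR in HN.
    assert (INR (S N) <= INR (S K0)) by (rewrite !S_INR; lra).
    assert (0 <= A / INR K0) by (apply Rdiv_le_0_compat; lra).
    assert (INR (S N) * B <= INR (S K0) * B) by (apply Rmult_le_compat_r; lra).
    lra.
  - replace N with (K0 + (N - K0))%nat by lia.
    specialize (I2 (N - K0)%nat).
    assert (0 < INR (K0 + (N - K0))) by (apply lt_0_INR; lia).
    assert (0 <= 1 / INR (K0 + (N - K0))) by (apply Rlt_le, Rdiv_lt_0_compat; lra).
    replace (A / INR K0) with (A * (1 / INR K0)) by (field; lra).
    assert (0 <= A * (1 / INR (K0 + (N - K0)))) by (apply Rmult_le_pos; lra).
    nra.
Qed.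

Lemma sum_growing (a : nat -> R) : (forall k, 0 <= a k) -> Un_growing (sum_f_R0 a).
Proof. intros H N. simpl. specialize (H (S N)). lra. Qed.

Lemma series_of_bound (a : nat -> R) (B : R) :
  (forall k, 0 <= a k) -> (forall N, sum_f_R0 a N <= B) ->
  exists l, is_series a l /\ l <= B.
Proof.
  intros Hpos HB.
  destruct (growing_cv (sum_f_R0 a) (sum_growing a Hpos)) as [l Hl].
  { exists B. intros x [i ->]. apply HB. }
  exists l. split.
  - apply is_series_Reals. exact Hl.
  - destruct (Rle_dec l B) as [H|H]; auto. exfalso.
    destruct (Hl (l - B)) as [N HN]. lra.
    specialize (HN N (le_n _)). specialize (HB N).
    unfold Rdist in HN. apply Rabs_def2 in HN. lra.
Qed.

Lemma psum_le_lim (a : nat -> R) l : (forall k, 0 <= a k) -> is_series a l ->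
  forall N, sum_f_R0 a N <= l.
Proof.
  intros Hpos Hl N. apply is_series_Reals in Hl.
  apply (growing_ineq (sum_f_R0 a) l (sum_growing a Hpos) Hl N).
Qed.

Lemma dom_series (a b : nat -> R) lb : (forall k, 0 <= a k <= b k) -> is_series b lb ->
  exists la, is_series a la /\ la <= lb.
Proof.
  intros H Hb. apply series_of_bound. intro k; apply H.
  intro N. eapply Rle_trans. apply sum_Rle. intros k _. apply (H k).
  apply psum_le_lim; auto. intro k. pose proof (H k). lra.
Qed.

Lemma nat_above x : exists N : nat, x <= INR N.
Proof.
  destruct (archimed x) as [H1 H2].
  destruct (Z_le_gt_dec 0 (up x)) as [H|H].
  - exists (Z.to_nat (up x)). rewrite INR_IZR_INZ, Z2Nat.id by auto. lra.
  - exists 0%nat. apply Z.gt_lt in H. apply IZR_lt in H. simpl. lra.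
Qed.

Lemma sin_lb_quarter a : 0 <= a <= 1 -> a / 2 <= sin a.
Proof.
  intro Ha. pose proof (sin_bound a 0 ltac:(lra) ltac:(pose proof PI2_3_2; lra)) as [H _].
  unfold sin_approx in H. simpl in H. unfold sin_term in H. simpl in H.
  assert (a * (a * a) <= 1) by (assert (a * a <= 1) by nra; nra).
  nra.
Qed.

Lemma rho_bound t : 0 <= t <= 1 -> (1 + cos t) / 2 <= 1 - t ^ 2 / 16.
Proof.
  intro Ht. replace t with (2 * (t / 2)) at 1 by field.
  rewrite cos_2a_sin. pose proof (sin_lb_quarter (t / 2) ltac:(lra)).
  assert (0 <= t / 2 / 2) by lra. simpl. nra.
Qed.

Lemma pow_exp_bound u N : 0 <= u <= 1 -> (1 - u) ^ N <= exp (- (INR N * u)).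
Proof.
  intro Hu. replace (- (INR N * u)) with (INR N * (- u)) by ring.
  rewrite <- exp_pow_n. apply pow_incr. split. lra.
  pose proof (exp_ineq1_le (- u)). lra.
Qed.

Lemma exp_le' x y : x <= y -> exp x <= exp y.
Proof. intro H. destruct (Rle_lt_or_eq_dec _ _ H). left; apply exp_increasing; auto. subst; lra. Qed.

Lemma choose_params n m del : (2 <= n)%nat -> 0 < del ->
  exists p M, (1 <= p)%nat /\ (m + 2 <= n ^ p)%nat /\ bet n p / (INR m + 2) <= 1 /\
   INR (S (n ^ p - 1)) * (rho n p m ^ M) ^ 2
   + (INR M * bet n p / 2) ^ 2 / INR (n ^ p - 1) < del.
Proof.
  intros Hn Hdel.
  set (L := ln (INR n)).
  assert (HL : / 2 < L).
  { unfold L. pose proof ln_lt_2. apply (le_INR 2) in Hn. simpl in Hn.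
    assert (ln 2 <= ln (INR n)) by (apply ln_le'; lra). lra. }
  pose proof (pos_INR m) as Hm.
  pose proof PI2_3_2 as Hpi. pose proof PI_4 as Hpi4.
  set (q := 8 * L ^ 2 * (INR m + 2) ^ 2 * (L + 1) / PI ^ 2).
  destruct (nat_above q) as [Q HQ].
  set (C2 := INR Q ^ 2 * PI ^ 2 * 6250 / (4 * L ^ 7)).
  assert (HC2 : 0 <= C2).
  { unfold C2. apply Rdiv_le_0_compat. pose proof (pos_INR Q).
    apply Rmult_le_pos; [apply Rmult_le_pos|]; try apply pow_le; lra.
    apply Rmult_lt_0_compat. lra. apply pow_lt; lra. }
  destruct (nat_above ((1 + C2) / del + INR m + 8)) as [p Hp].
  assert (Hp0 : 0 <= (1 + C2) / del) by (apply Rdiv_le_0_compat; lra).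
  set (P := INR p) in *.
  assert (HP8 : 8 <= P) by lra.
  assert (Hp1 : (1 <= p)%nat) by (apply INR_le; simpl; fold P; lra).
  assert (Hnp : INR (n ^ p) = exp (P * L)).
  { rewrite pow_INR. unfold P, L. rewrite <- exp_pow_n, exp_ln. reflexivity.
    apply lt_0_INR; lia. }
  assert (H2p : forall j, (INR j + 1 <= INR (2 ^ j))).
  { induction j as [|j IH]. simpl. lra. rewrite S_INR, Nat.pow_succ_r', mult_INR.
    change (INR 2) with (1 + 1). pose proof (pos_INR (2 ^ j)). pose proof (pos_INR j). lra. }
  assert (Hmp : (m + 2 <= n ^ p)%nat).
  { apply INR_le. rewrite plus_INR. simpl (INR 2).
    assert (INR (2 ^ p) <= INR (n ^ p)).
    { rewrite !pow_INR. apply pow_incr. apply (le_INR 2) in Hn. simpl in Hn. simpl. lra. }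
    specialize (H2p p). fold P in H2p. lra. }
  exists p, (p ^ 3 * Q)%nat.
  assert (HLP : 0 < P * L) by nra.
  assert (Hbet : bet n p = PI / (P * L)) by reflexivity.
  assert (Hb1 : bet n p <= 1).
  { rewrite Hbet. apply Rmult_le_reg_r with (P * L); auto.
    unfold Rdiv. rewrite Rmult_assoc, Rinv_l by lra. nra. }
  assert (Hb0 : 0 < bet n p).
  { rewrite Hbet. apply Rdiv_lt_0_compat; lra. }
  set (th := bet n p / (INR m + 2)).
  assert (Hth : 0 <= th <= 1).
  { unfold th. split. apply Rdiv_le_0_compat; lra.
    apply Rmult_le_reg_r with (INR m + 2). lra.
    unfold Rdiv. rewrite Rmult_assoc, Rinv_l by lra. lra. }
  split; [auto|split; [auto|split; [apply Hth|]]].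
  set (M := (p ^ 3 * Q)%nat).
  assert (HM : INR M = P ^ 3 * INR Q) by (unfold M, P; rewrite mult_INR, pow_INR; reflexivity).
  assert (Hrho : 0 <= rho n p m <= 1 - th ^ 2 / 16).
  { unfold rho. fold th. split. pose proof (COS_bound th). lra. apply rho_bound; auto. }
  set (u := th ^ 2 / 16).
  assert (Hu : 0 <= u <= 1) by (unfold u; split; [|assert (th ^ 2 <= 1) by (simpl; nra)]; 
     [apply Rdiv_le_0_compat; [apply pow2_ge_0|lra] | lra]).
  assert (T1a : (rho n p m ^ M) ^ 2 <= exp (- (2 * INR M * u))).
  { assert (0 <= rho n p m ^ M <= (1 - u) ^ M).
    { split. apply pow_le; lra. apply pow_incr. unfold u; lra. }
    pose proof (pow_exp_bound u M Hu).
    assert ((rho n p m ^ M) ^ 2 <= exp (- (INR M * u)) ^ 2) by (apply pow_incr; lra).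
    rewrite exp_pow_n in H1. replace (INR 2 * - (INR M * u)) with (- (2 * INR M * u)) in H1
      by (simpl; ring). exact H1. }
  assert (T1b : 2 * INR M * u >= P * (L + 1)).
  { unfold u, th. rewrite Hbet, HM.
    replace (2 * (P ^ 3 * INR Q) * ((PI / (P * L) / (INR m + 2)) ^ 2 / 16))
      with (P * INR Q * (PI ^ 2 / (8 * L ^ 2 * (INR m + 2) ^ 2))) by (field; lra).
    assert (Hq : q * (PI ^ 2 / (8 * L ^ 2 * (INR m + 2) ^ 2)) = L + 1).
    { unfold q. field. split. lra. split. lra. pose proof PI2_RGT_0. lra. }
    assert (0 < PI ^ 2 / (8 * L ^ 2 * (INR m + 2) ^ 2)).
    { apply Rdiv_lt_0_compat. apply pow_lt; lra.
      apply Rmult_lt_0_compat. apply Rmult_lt_0_compat. lra. apply pow_lt; lra. apply pow_lt; lra. }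
    assert (INR Q * (PI ^ 2 / (8 * L ^ 2 * (INR m + 2) ^ 2)) >= L + 1).
    { rewrite <- Hq. apply Rle_ge, Rmult_le_compat_r; lra. }
    nra. }
  assert (Hnp1 : INR (S (n ^ p - 1)) = INR (n ^ p)) by (f_equal; pose proof (Nat.pow_nonzero n p ltac:(lia)); lia).
  assert (T1 : INR (S (n ^ p - 1)) * (rho n p m ^ M) ^ 2 <= 1 / P).
  { rewrite Hnp1, Hnp.
    eapply Rle_trans. apply Rmult_le_compat_l. left; apply exp_pos. apply T1a.
    rewrite <- exp_plus.
    eapply Rle_trans. apply exp_le' with (y := - P). nra.
    rewrite exp_Ropp. pose proof (exp_ineq1_le P).
    unfold Rdiv. rewrite Rmult_1_l. apply Rinv_le_contravar; lra. }
  assert (T2 : (INR M * bet n p / 2) ^ 2 / INR (n ^ p - 1) <= C2 / P).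
  { assert (HX : INR (n ^ p - 1) = INR (n ^ p) - 1).
    { rewrite minus_INR. reflexivity. pose proof (Nat.pow_nonzero n p ltac:(lia)); lia. }
    assert (Hn2 : 2 <= INR (n ^ p)) by (pose proof (le_INR _ _ Hmp) as Hm2; rewrite plus_INR in Hm2; change (INR 2) with (1+1) in Hm2; lra).
    pose proof (exp_ge_pow5 (P * L) ltac:(lra)) as E5. rewrite <- Hnp in E5.
    set (Y := (P * L / 5) ^ 5) in *.
    assert (HY : 0 < Y) by (unfold Y; apply pow_lt; lra).
    assert (HXY : Y / 2 <= INR (n ^ p - 1)) by (rewrite HX; lra).
    set (A2 := (INR M * bet n p / 2) ^ 2).
    assert (HA2 : 0 <= A2) by (unfold A2; apply pow2_ge_0).
    apply Rle_trans with (A2 / (Y / 2)).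
    { unfold Rdiv. apply Rmult_le_compat_l; auto. apply Rinv_le_contravar; lra. }
    unfold A2, Y, C2. rewrite HM, Hbet. right. field. split; lra. }
  assert (Hfin : (1 + C2) / P < del).
  { apply Rmult_lt_reg_r with (P / del). apply Rdiv_lt_0_compat; lra.
    replace ((1 + C2) / P * (P / del)) with ((1 + C2) / del) by (field; lra).
    replace (del * (P / del)) with P by (field; lra). lra. }
  replace ((1 + C2) / P) with (1 / P + C2 / P) in Hfin by (field; lra).
  lra.
Qed.

Definition Approx (n : nat) (g : nat -> C) : Prop :=
  forall eps, 0 < eps -> exists L l,
    is_series (fun k => (Cmod (Cminus (g k) (lincomb n L k)))^2) l /\ l < eps.

Lemma cmod2_nonneg z : 0 <= Cmod z ^ 2.
Proof. apply pow2_ge_0. Qed.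

Lemma add_bound (x y : nat -> C) lx ly :
  is_series (fun k => Cmod (x k) ^ 2) lx -> is_series (fun k => Cmod (y k) ^ 2) ly ->
  exists l, is_series (fun k => Cmod (Cplus (x k) (y k)) ^ 2) l /\ l <= 2 * lx + 2 * ly.
Proof.
  intros Hx Hy.
  assert (Hb : is_series (fun k => 2 * Cmod (x k) ^ 2 + 2 * Cmod (y k) ^ 2) (2 * lx + 2 * ly)).
  { apply (is_series_plus (fun k => 2 * Cmod (x k) ^ 2) (fun k => 2 * Cmod (y k) ^ 2)).
    apply (is_series_scal_l 2 (fun k => Cmod (x k) ^ 2)); auto.
    apply (is_series_scal_l 2 (fun k => Cmod (y k) ^ 2)); auto. }
  apply (dom_series (fun k => Cmod (Cplus (x k) (y k)) ^ 2) (fun k => 2 * Cmod (x k) ^ 2 + 2 * Cmod (y k) ^ 2) (2 * lx + 2 * ly)); [|exact Hb].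
  intro k. split. apply cmod2_nonneg.
  pose proof (Cmod_triangle (x k) (y k)). pose proof (Cmod_ge_0 (Cplus (x k) (y k))).
  pose proof (Cmod_ge_0 (x k)). pose proof (Cmod_ge_0 (y k)).
  set (a := Cmod (x k)) in *. set (b := Cmod (y k)) in *. set (c := Cmod (Cplus (x k) (y k))) in *.
  assert (c * c <= (a + b) * (a + b)) by (apply Rmult_le_compat; lra).
  pose proof (pow2_ge_0 (a - b)). simpl in *. nra.
Qed.

Lemma lincomb_app n L1 L2 k : lincomb n (L1 ++ L2) k = Cplus (lincomb n L1 k) (lincomb n L2 k).
Proof.
  induction L1 as [|p L1 IH].
  - simpl. unfold lincomb at 2. simpl. rewrite Cplus_0_l. reflexivity.
  - unfold lincomb in *. simpl. rewrite IH. ring.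
Qed.

Definition scaleL (c : C) (L : list (C * Q)) := map (fun p => (Cmult c (fst p), snd p)) L.

Lemma lincomb_scal n c L k : lincomb n (scaleL c L) k = Cmult c (lincomb n L k).
Proof.
  induction L as [|p L IH].
  - unfold lincomb; simpl. unfold RtoC, Cmult; simpl; f_equal; ring.
  - unfold lincomb, scaleL in *. simpl. rewrite IH. ring.
Qed.

Lemma Approx_ext n g h : (forall k, g k = h k) -> Approx n g -> Approx n h.
Proof.
  intros E Hg eps He. destruct (Hg eps He) as [L [l [H1 H2]]].
  exists L, l. split; auto. eapply is_series_ext; [|apply H1]. intro k. simpl. rewrite E. reflexivity.
Qed.

Lemma Approx_add n g h : Approx n g -> Approx n h -> Approx n (fun k => Cplus (g k) (h k)).
Proof.
  intros Hg Hh eps He.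
  destruct (Hg (eps / 4) ltac:(lra)) as [L1 [l1 [A1 B1]]].
  destruct (Hh (eps / 4) ltac:(lra)) as [L2 [l2 [A2 B2]]].
  destruct (add_bound _ _ _ _ A1 A2) as [l [Hl Hle]].
  exists (L1 ++ L2), l. split; [|lra].
  eapply is_series_ext; [|apply Hl]. intro k. simpl. rewrite lincomb_app.
  replace (Cminus (Cplus (g k) (h k)) (Cplus (lincomb n L1 k) (lincomb n L2 k)))
    with (Cplus (Cminus (g k) (lincomb n L1 k)) (Cminus (h k) (lincomb n L2 k))) by ring.
  reflexivity.
Qed.

Lemma Approx_scal n c g : Approx n g -> Approx n (fun k => Cmult c (g k)).
Proof.
  intros Hg eps He.
  set (s := Cmod c ^ 2).
  assert (Hs : 0 <= s) by apply cmod2_nonneg.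
  destruct (Hg (eps / (s + 1))) as [L [l [A1 B1]]].
  { apply Rdiv_lt_0_compat; lra. }
  exists (scaleL c L), (s * l). split.
  - pose proof (is_series_scal_l s _ _ A1) as H.
    eapply is_series_ext; [|apply H]. intro k. simpl. rewrite lincomb_scal.
    unfold s. replace (Cminus (Cmult c (g k)) (Cmult c (lincomb n L k)))
      with (Cmult c (Cminus (g k) (lincomb n L k))) by ring.
    rewrite Cmod_mult. unfold scal; simpl; unfold mult; simpl. ring.
  - assert (0 <= l).
    { pose proof (psum_le_lim _ l (fun k => cmod2_nonneg _) A1 0). simpl in H. 
      pose proof (cmod2_nonneg (Cminus (g 0%nat) (lincomb n L 0))). lra. }
    apply Rle_lt_trans with (s * (eps / (s + 1))).
    apply Rmult_le_compat_l; lra.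
    replace (s * (eps / (s + 1))) with (eps - eps / (s + 1)) by (field; lra).
    assert (0 < eps / (s + 1)) by (apply Rdiv_lt_0_compat; lra). lra.
Qed.

Lemma tq_b n p : (2 <= n)%nat -> (1 <= p)%nat -> tq n (1 # Pos.of_nat p)%Q = bet n p.
Proof.
  intros Hn Hp. pose proof (lnn_pos n Hn).
  assert (1 <= INR p) by (apply (le_INR 1); auto).
  unfold tq, bet, Q2R. cbn [Qnum Qden].
  rewrite <- (positive_nat_Z (Pos.of_nat p)), Nat2Pos.id by lia. rewrite <- INR_IZR_INZ.
  field. split; lra.
Qed.

Definition em (m k : nat) : C := if Nat.eqb k m then RtoC 1 else RtoC 0.

Lemma approx_diff n m : (2 <= n)%nat -> Approx n (fun k => Cminus (em m k) (em (S m) k)).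
Proof.
  intros Hn eps He.
  destruct (choose_params n m eps Hn He) as [p [M [Hp1 [Hmp [Hth Hb]]]]].
  set (b := (1 # Pos.of_nat p)%Q).
  set (y0 := ln (INR (S m))).
  set (K0 := (n ^ p - 1)%nat).
  set (A := (INR M * bet n p / 2) ^ 2).
  set (B := (rho n p m ^ M) ^ 2).
  destruct (series_of_bound (fun k => (Dk (bet n p) y0 M m k) ^ 2) (INR (S K0) * B + A / INR K0))
    as [l [Hl Hle]].
  { intro k. apply pow2_ge_0. }
  { apply psum_bound.
    - unfold K0. lia.
    - unfold B. apply pow2_ge_0.
    - unfold A. apply pow2_ge_0.
    - intros k Hk. apply near; auto.
    - intros k Hk. apply far; auto. unfold K0 in Hk. lia. }
  exists (conv n (powL (kern n b y0) M)), l. split.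
  - eapply is_series_ext; [|apply Hl]. intro k. symmetry.
    unfold em. rewrite err_eq. unfold b. rewrite tq_b; auto.
  - unfold K0, A, B in *. lra.
Qed.

Lemma lincomb_e0 n k : lincomb n ((RtoC (-1), 0%Q) :: nil) k = em 0 k.
Proof.
  unfold lincomb. simpl fold_right. simpl fst. simpl snd. rewrite kappa_eq, tq_0.
  rewrite !Rmult_0_l, cis_0. rewrite Ropp_0.
  unfold em. destruct k as [|k'].
  - simpl Nat.eqb. replace ((1, 0) : C) with (RtoC 1) by reflexivity. field.
  - simpl Nat.eqb. replace ((1, 0) : C) with (RtoC 1) by reflexivity.
    unfold Cminus, Cplus, Copp, Cmult, Cinv, RtoC; simpl. f_equal; field.
Qed.

Lemma approx_e0 n : Approx n (em 0).
Proof.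
  intros eps He. exists ((RtoC (-1), 0%Q) :: nil).
  destruct (series_of_bound (fun k => (Cmod (Cminus (em 0 k) (lincomb n ((RtoC (-1), 0%Q) :: nil) k)))^2) 0)
    as [l [Hl Hle]].
  { intro k. apply cmod2_nonneg. }
  { intro N. apply Req_le. induction N as [|N IH].
    - change (sum_f_R0 ?a 0) with (a 0%nat). cbv beta. rewrite lincomb_e0. unfold Cminus. rewrite Cplus_opp_r, Cmod_0. simpl. ring.
    - rewrite tech5. cbv beta. rewrite IH, lincomb_e0. unfold Cminus. rewrite Cplus_opp_r, Cmod_0. simpl. ring. }
  exists l. split; auto. lra.
Qed.

Lemma approx_em n m : (2 <= n)%nat -> Approx n (em m).
Proof.
  intro Hn. induction m as [|m IH].
  - apply approx_e0.
  - pose proof (Approx_add n _ _ IH (Approx_scal n (RtoC (-1)) _ (approx_diff n m Hn))) as H.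
    eapply Approx_ext; [|apply H]. intro k. simpl.
    replace (RtoC (-1)) with (Copp (RtoC 1))
      by (unfold RtoC, Copp; apply injective_projections; simpl; ring).
    unfold Cminus. ring.
Qed.

Definition trunc (f : nat -> C) (N : nat) (k : nat) : C := if Nat.ltb k N then f k else RtoC 0.

Lemma approx_trunc n f N : (2 <= n)%nat -> Approx n (trunc f N).
Proof.
  intro Hn. induction N as [|N IH].
  - eapply Approx_ext; [|apply (Approx_scal n (RtoC 0) _ (approx_e0 n))].
    intro k. unfold trunc. simpl. ring.
  - eapply Approx_ext; [|apply (Approx_add n _ _ IH (Approx_scal n (f N) _ (approx_em n N Hn)))].
    intro k. unfold trunc, em.
    destruct (Nat.ltb_spec k N); destruct (Nat.ltb_spec k (S N)); destruct (Nat.eqb_spec k N);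
      try lia; subst; ring.
Qed.

Lemma tail_sum (a : nat -> R) N0 K :
  sum_f_R0 (fun k => if Nat.ltb k (S N0) then 0 else a k) K =
  if Nat.leb K N0 then 0 else sum_f_R0 a K - sum_f_R0 a N0.
Proof.
  induction K as [|K IH].
  - simpl. destruct N0; simpl; reflexivity.
  - rewrite tech5, IH. rewrite tech5.
    destruct (Nat.leb_spec K N0); destruct (Nat.leb_spec (S K) N0);
      destruct (Nat.ltb_spec (S K) (S N0)); try lia.
    + ring.
    + replace N0 with K by lia. ring.
    + ring.
Qed.

Theorem mainTheorem14 (n : nat) (hn : (2 <= n)%nat) :
  forall f : nat -> C, inH2 f ->
  forall eps : R, 0 < eps ->
  exists (L : list (C * Q)) (l : R),
    is_series (fun k => (Cmod (Cminus (f k) (lincomb n L k)))^2) l /\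
    sqrt l < eps.
Proof.
  intros f [lf Hlf] eps He.
  set (eta := eps ^ 2 / 8).
  assert (Heta : 0 < eta) by (unfold eta; apply Rdiv_lt_0_compat; [apply pow_lt|]; lra).
  pose proof Hlf as Hlf'.
  apply is_series_Reals in Hlf'.
  destruct (Hlf' eta Heta) as [N0 HN0].
  specialize (HN0 N0 (le_n _)). unfold Rdist in HN0.
  set (a := fun k => Cmod (f k) ^ 2).
  assert (Ha : forall k, 0 <= a k) by (intro; apply cmod2_nonneg).
  pose proof (psum_le_lim a lf Ha Hlf) as Hps.
  set (t := fun k => if Nat.ltb k (S N0) then RtoC 0 else f k).
  destruct (series_of_bound (fun k => Cmod (t k) ^ 2) (lf - sum_f_R0 a N0)) as [lt [Hlt Hltle]].
  { intro; apply cmod2_nonneg. }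
  { intro K.
    assert (E : sum_f_R0 (fun k => Cmod (t k) ^ 2) K =
                sum_f_R0 (fun k => if Nat.ltb k (S N0) then 0 else a k) K).
    { apply sum_eq. intros i _. unfold t, a. destruct (Nat.ltb i (S N0)).
      rewrite Cmod_0. simpl. ring. reflexivity. }
    rewrite E, tail_sum. destruct (Nat.leb K N0).
    - specialize (Hps N0). lra.
    - specialize (Hps K). lra. }
  destruct (approx_trunc n f (S N0) hn eta Heta) as [L [l1 [Hl1 Hl1e]]].
  destruct (add_bound t (fun k => Cminus (trunc f (S N0) k) (lincomb n L k)) lt l1 Hlt Hl1)
    as [l [Hl Hle]].
  exists L, l. split.
  - eapply is_series_ext; [|apply Hl]. intro k.
    assert (E : Cplus (t k) (Cminus (trunc f (S N0) k) (lincomb n L k)) = Cminus (f k) (lincomb n L k)).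
    { unfold t, trunc. destruct (Nat.ltb k (S N0)); unfold Cminus; ring. }
    cbv beta. rewrite E. reflexivity.
  - assert (Hl0 : 0 <= l).
    { pose proof (psum_le_lim _ l (fun k => cmod2_nonneg _) Hl 0). simpl in H.
      pose proof (cmod2_nonneg (Cplus (t 0%nat) (Cminus (trunc f (S N0) 0) (lincomb n L 0)))).
      lra. }
    assert (Hlt2 : l < eps ^ 2).
    { apply Rabs_def2 in HN0. assert (0 < eps ^ 2) by (apply pow_lt; lra). unfold eta in *. unfold a in Hltle. lra. }
    rewrite <- (sqrt_pow2 eps) by lra.
    apply sqrt_lt_1_alt. lra.
Qed.
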